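(* For every metric space $X$, either $h_\infty(X)=0$ or $h_\infty(X)=\infty$. Consequently the coarse entropy of any isometric embedding $f\colon X\to X$ is either $0$ or $\infty$.
   Context: For a map $f\colon X\to X$ on a metric space $(X,d)$, $\delta>0$, $n\in\mathbb N$, $x_0\in X$: a $\delta$-pseudoorbit of $f$ of length $n$ from $x_0$ is $(x_0,\dots,x_n)$ with $d(f(x_i),x_{i+1})\le\delta$ for all $i<n$; $P(f,n,\delta,x_0)$ is the set of these with distance $\max_i d(x_i,y_i)$; $s(f,n,R,\delta,x_0)$ is the supremum of cardinalities of $R$-separated subsets (distinct elements at distance $\ge R$) of $P(f,n,\delta,x_0)$; $h_\infty(f)=\lim_{\delta\to\infty}\lim_{R\to\infty}\limsup_{n\to\infty}\frac1n\log s(f,n,R,\delta,x_0)\in[0,\infty]$, independent of $x_0$. The coarse entropy of the space is $h_\infty(X)=h_\infty(\mathrm{id}_X)$, which equals $h_\infty(f)$ for every isometric embedding $f\colon X\to X$. *)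

(* Defs.v *)
From HB Require Import structures.
From mathcomp Require Import all_boot all_order all_algebra.
From mathcomp Require Import all_classical all_reals all_analysis.
Set Implicit Arguments. Unset Strict Implicit. Unset Printing Implicit Defensive.
Import Order.TTheory GRing.Theory Num.Theory.
Local Open Scope classical_set_scope.
Local Open Scope ring_scope.

Definition is_metric (R : realType) (X : Type) (d : X -> X -> R) : Prop :=
  (forall x y, 0 <= d x y) /\
  (forall x y, d x y = 0 <-> x = y) /\
  (forall x y, d x y = d y x) /\
  (forall x y z, d x z <= d x y + d y z).

(* (x_0,...,x_n) is represented by a sequence x : nat -> X, of which only
   the entries x 0, ..., x n matter. *)
Definition pseudo_orbit (R : realType) (X : Type) (d : X -> X -> R)
  (f : X -> X) (n : nat) (delta : R) (x0 : X) (x : nat -> X) : Prop :=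
  x 0%N = x0 /\ forall i, (i < n)%N -> d (f (x i)) (x i.+1) <= delta.

Definition orbit_dist (R : realType) (X : Type) (d : X -> X -> R) (n : nat)
  (x y : nat -> X) : R :=
  \big[Num.max/0]_(i < n.+1) d (x i) (y i).

Definition same_tuple (X : Type) (n : nat) (x y : nat -> X) : Prop :=
  forall i, (i <= n)%N -> x i = y i.

(* k is the cardinality of some R-separated subset of P(f,n,delta,x0):
   there are k pairwise distinct pseudo-orbits at mutual distance >= Rsep. *)
Definition has_separated_set (R : realType) (X : Type) (d : X -> X -> R)
  (f : X -> X) (n : nat) (Rsep delta : R) (x0 : X) (k : nat) : Prop :=
  exists orb : nat -> nat -> X,
    (forall j, (j < k)%N -> pseudo_orbit d f n delta x0 (orb j)) /\
    (forall j j', (j < k)%N -> (j' < k)%N -> j <> j' ->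
        ~ same_tuple n (orb j) (orb j') /\ Rsep <= orbit_dist d n (orb j) (orb j')).

Definition s_sep (R : realType) (X : Type) (d : X -> X -> R)
  (f : X -> X) (n : nat) (Rsep delta : R) (x0 : X) : \bar R :=
  ereal_sup [set ((k%:R : R)%:E) | k in [set k | has_separated_set d f n Rsep delta x0 k]].

Definition growth (R : realType) (X : Type) (d : X -> X -> R)
  (f : X -> X) (Rsep delta : R) (x0 : X) : \bar R :=
  limn_esup (fun n : nat => ((n%:R : R)^-1)%:E * lne (s_sep d f n Rsep delta x0))%E.

Definition coarse_entropy (R : realType) (X : Type) (d : X -> X -> R)
  (f : X -> X) (x0 : X) : \bar R :=
  lim ((fun delta : R => lim ((fun Rsep : R => growth d f Rsep delta x0) @ +oo)) @ +oo).

Definition coarse_entropy_space (R : realType) (X : Type) (d : X -> X -> R)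
  (x0 : X) : \bar R := coarse_entropy d id x0.

Definition isometric_embedding (R : realType) (X : Type) (d : X -> X -> R)
  (f : X -> X) : Prop := forall x y, d (f x) (f y) = d x y.

(* Main.v *)
Require Import Defs.
From HB Require Import structures.
From mathcomp Require Import all_boot all_order all_algebra.
From mathcomp Require Import all_classical all_reals all_analysis.
From mathcomp Require Import zify ring lra.
Import Order.TTheory GRing.Theory Num.Theory.

Module P1.
Set Implicit Arguments. Unset Strict Implicit. Unset Printing Implicit Defensive.
Local Open Scope ring_scope.

Section Comb.
Variables (R : realType) (X : Type) (d : X -> X -> R).
Hypothesis hd : is_metric d.

Lemma d0 x : d x x = 0.
Proof. by case: hd => _ [/(_ x x) [_ ->]]. Qed.
Lemma dtri x y z : d x z <= d x y + d y z.
Proof. by case: hd => _ [_ [_ ]]. Qed.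
Lemma dsym x y : d x y = d y x.
Proof. by case: hd => _ [_ [ ]]. Qed.
Lemma deq x y : d x y = 0 -> x = y.
Proof. by case: hd => _ [/(_ x y) [ ]]. Qed.

Lemma orbit_dist_ge n x y i : (i <= n)%N -> d (x i) (y i) <= orbit_dist d n x y.
Proof.
move=> hi; rewrite /orbit_dist; apply/bigmax_geP; right.
by exists (Ordinal (hi : (i < n.+1)%N)).
Qed.

Lemma orbit_dist_ex n x y r : 0 < r -> r <= orbit_dist d n x y ->
  exists2 i, (i <= n)%N & r <= d (x i) (y i).
Proof.
rewrite /orbit_dist => r0 /bigmax_geP [|[i _ hi]]; first by rewrite leNgt r0.
by exists (val i); first by rewrite -ltnS ltn_ord.
Qed.

Lemma not_same n x y r : 0 < r -> r <= orbit_dist d n x y -> ~ same_tuple n x y.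
Proof.
move=> r0 /(orbit_dist_ex r0) [i hi hr] hs.
by move: hr; rewrite hs // d0 leNgt r0.
Qed.

Lemma chain_bound n delta x0 x a b : pseudo_orbit d id n delta x0 x ->
  (a <= b)%N -> (b <= n)%N -> d (x a) (x b) <= (b - a)%:R * delta.
Proof.
move=> [_ hx] hab; elim: b hab => [|b IH].
  by rewrite leqn0 => /eqP -> _; rewrite d0 mul0r.
rewrite leq_eqVlt => /orP [/eqP -> _|hab hb]; first by rewrite subnn mul0r d0.
have hab' : (a <= b)%N by [].
apply: le_trans (dtri _ (x b) _) _.
rewrite subSn // mulrSr mulrDl mul1r lerD //; first exact: IH hab' (ltnW hb).
exact: (hx b hb).
Qed.

End Comb.

End P1.
Import P1.

Module P2.
Set Implicit Arguments. Unset Strict Implicit. Unset Printing Implicit Defensive.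
Local Open Scope ring_scope.

Section Comb2.
Variables (R : realType) (X : Type) (d : X -> X -> R).
Hypothesis hd : is_metric d.

Lemma sep_compress (k m : nat) (delta Rs : R) x0 K : (0 < k)%N -> 0 <= delta -> 0 < Rs ->
  has_separated_set d id m (Rs + 2 * k%:R * delta) delta x0 K ->
  has_separated_set d id (m %/ k).+1 Rs (k%:R * delta) x0 K.
Proof.
move=> k0 de0 Rs0 [orb [hpo hsep]].
exists (fun j i => orb j (minn (k * i) m)); split.
  move=> j hj; have [h0 hx] := hpo j hj; split; first by rewrite muln0 min0n.
  move=> i hi /=.
  have hab : (minn (k * i) m <= minn (k * i.+1) m)%N by lia.
  apply: le_trans (chain_bound hd (hpo j hj) hab (geq_minr _ _)) _.
  apply: ler_wpM2r => //; rewrite ler_nat; lia.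
move=> j j' hj hj' hjj.
have [_ hs] := hsep j j' hj hj' hjj.
have Rs2 : 0 < Rs + 2 * k%:R * delta.
  by apply: ltr_wpDr => //; rewrite mulr_ge0 // mulr_ge0.
have [i hi hdi] := orbit_dist_ex Rs2 hs.
set q := (i %/ k)%N.
have hq : (minn (k * q) m = k * q)%N.
  by apply/minn_idPl; rewrite mulnC (leq_trans (leq_divM _ _)).
have hkq : (k * q <= i)%N by rewrite mulnC leq_divM.
have hik : (i - k * q <= k)%N.
  by rewrite leq_subLR {1}(divn_eq i k) mulnC leq_add2l ltnW // ltn_pmod.
have hqn : (q <= (m %/ k).+1)%N by apply: leqW; apply: leq_div2r.
have key : Rs <= d (orb j (minn (k * q) m)) (orb j' (minn (k * q) m)).
  rewrite hq.
  have h1 := chain_bound hd (hpo j hj) hkq hi.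
  have h2 := chain_bound hd (hpo j' hj') hkq hi.
  have hkd : (i - k * q)%:R * delta <= k%:R * delta.
    by apply: ler_wpM2r => //; rewrite ler_nat.
  have t1 := dtri hd (orb j i) (orb j (k * q)) (orb j' i).
  have t2 := dtri hd (orb j (k * q)) (orb j' (k * q)) (orb j' i).
  rewrite (dsym hd (orb j i) (orb j (k * q))) in t1.
  lra.
have hd' := le_trans key (@orbit_dist_ge R X d (m %/ k).+1 (fun i => orb j (minn (k * i) m)) (fun i => orb j' (minn (k * i) m)) q hqn).
split; last exact: hd'.
exact: (@not_same R X d hd _ _ _ Rs Rs0 hd').
Qed.

End Comb2.

End P2.
Import P2.

Module P3.
Set Implicit Arguments. Unset Strict Implicit. Unset Printing Implicit Defensive.
Local Open Scope ring_scope.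

Section Comb3.
Variables (R : realType) (X : Type) (d : X -> X -> R).
Hypothesis hd : is_metric d.
Variable f : X -> X.
Hypothesis hf : isometric_embedding d f.

Lemma iso_iter i x y : d (iter i f x) (iter i f y) = d x y.
Proof. by elim: i => //= i IH; rewrite hf. Qed.

Lemma sep_lift n Rs delta x0 K :
  has_separated_set d id n Rs delta x0 K -> has_separated_set d f n Rs delta x0 K.
Proof.
move=> [orb [hpo hsep]].
exists (fun j i => iter i f (orb j i)); split.
  move=> j hj; have [h0 hx] := hpo j hj; split => //= i hi.
  by rewrite -/(iter i.+1 f _) iso_iter; exact: hx.
move=> j j' hj hj' hjj; have [hns hs] := hsep j j' hj hj' hjj; split.
  move=> hsame; apply: hns => i hi; apply: (deq hd).
  by rewrite -(iso_iter i) hsame // d0.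
rewrite /orbit_dist; under eq_bigr do rewrite iso_iter; exact: hs.
Qed.

Lemma sep_pull n Rs delta x0 K : 0 < Rs -> d x0 (f x0) <= delta ->
  has_separated_set d f n Rs delta x0 K -> has_separated_set d id (n + n) Rs delta x0 K.
Proof.
move=> Rs0 hc [orb [hpo hsep]].
pose o j i := if (i < n)%N then iter i f x0 else iter (n + n - i)%N f (orb j (i - n)%N).
have hbase i : d (iter i f x0) (iter i.+1 f x0) <= delta.
  by rewrite iterSr iso_iter.
exists o; split.
  move=> j hj; have [h0 hx] := hpo j hj; split.
    rewrite /o; case: ltnP => // hn0.
    have e : n = 0%N by lia.
    by rewrite e; exact: h0.
  move=> i hi /=; rewrite /o.
  case: (ltnP i.+1 n) => h1.
    by rewrite (ltnW h1); exact: hbase.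
  case: (ltnP i n) => h2.
    have e1 : i.+1 = n by lia.
    have -> : (n + n - i.+1 = i.+1)%N by lia.
    have -> : (i.+1 - n = 0)%N by lia.
    by rewrite h0; exact: hbase.
  have -> : (n + n - i = (n + n - i.+1).+1)%N by lia.
  have -> : (i.+1 - n = (i - n).+1)%N by lia.
  rewrite iterSr iso_iter; apply: hx; lia.
move=> j j' hj hj' hjj; have [_ hs] := hsep j j' hj hj' hjj.
have [i hi hdi] := orbit_dist_ex Rs0 hs.
have hin : (n + i <= n + n)%N by lia.
have key : Rs <= d (o j (n + i)%N) (o j' (n + i)%N).
  rewrite /o ifF; last by apply/negbTE; rewrite -leqNgt leq_addr.
  by rewrite ifF ?iso_iter ?addKn //; apply/negbTE; rewrite -leqNgt leq_addr.
have hd' := le_trans key (@orbit_dist_ge R X d (n + n)%N (o j) (o j') (n + i)%N hin).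
split; last exact: hd'.
exact: (@not_same R X d hd _ _ _ Rs Rs0 hd').
Qed.

End Comb3.

End P3.
Import P3.

Module P4.
Set Implicit Arguments. Unset Strict Implicit. Unset Printing Implicit Defensive.
Local Open Scope classical_set_scope.
Local Open Scope ring_scope.
Local Open Scope ereal_scope.

Lemma LS_scaled (R : realType) (u v : nat -> \bar R) (c : R) (g : nat -> nat) :
  (0 < c)%R ->
  (forall N, exists M, forall m, (M <= m)%N -> (N <= g m)%N /\ c%:E * v m <= u (g m)) ->
  c%:E * limn_esup v <= limn_esup u.
Proof.
move=> c0 H; rewrite /limn_esup !limf_esupE -ereal_inf_pZl //.
apply: le_ereal_inf_tmp => _ [W hW <-].
have [N _ hN] := hW.
have [M hM] := H N.
apply: ge_ereal_inf; exists (c%:E * ereal_sup (v @` [set m | (M <= m)%N])).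
  exists (ereal_sup (v @` [set m | (M <= m)%N])) => //.
  by exists [set m | (M <= m)%N] => //; exists M.
rewrite -ereal_sup_pZl //; apply: ge_ereal_sup => _ [_ [m hm <-] <-].
have [h1 h2] := hM m hm.
apply: le_trans h2 _; apply: ereal_sup_ubound; exists (g m) => //.
exact: hN.
Qed.

Section Growth.
Variables (R : realType) (X : Type) (d : X -> X -> R).
Hypothesis hd : is_metric d.
Variables (f : X -> X) (x0 : X).

Lemma s_ge0 n Rs delta : 0 <= s_sep d f n Rs delta x0.
Proof.
apply: le_ereal_sup_tmp; exists 0%:E => //; exists 0%N => //.
by exists (fun _ _ => x0); split => // j.
Qed.

Lemma s_ge1 n Rs delta : (0 <= delta)%R -> 1 <= s_sep d f n Rs delta x0.
Proof.
move=> de0; apply: le_ereal_sup_tmp; exists 1%:E => //; exists 1%N => //.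
exists (fun _ i => iter i f x0); split.
  move=> j _; split => // i _ /=; by rewrite (d0 hd).
by move=> [|?] [|?].
Qed.

Lemma s_le (n n' : nat) Rs Rs' delta delta' :
  (forall K, has_separated_set d f n Rs delta x0 K -> has_separated_set d f n' Rs' delta' x0 K) ->
  s_sep d f n Rs delta x0 <= s_sep d f n' Rs' delta' x0.
Proof.
move=> H; apply: ereal_sup_le => _ [K hK <-]; exists K => //; exact: H.
Qed.

Lemma lne_mono (x y : \bar R) : 0 <= x -> x <= y -> lne x <= lne y.
Proof.
move=> x0' xy; rewrite lee_lne // !in_itv /= ?leey ?x0' //.
by rewrite andbT (le_trans x0' xy).
Qed.

Lemma G_mono Rs Rs' delta delta' : (Rs' <= Rs)%R -> (delta <= delta')%R ->
  growth d f Rs delta x0 <= growth d f Rs' delta' x0.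
Proof.
move=> hR hde; rewrite -[growth d f Rs delta x0]mul1e.
apply: (@LS_scaled R _ _ 1 id) => // N; exists N => m hm; split => //.
rewrite mul1e; apply: lee_wpmul2l; first by rewrite lee_fin invr_ge0.
apply: lne_mono; first exact: s_ge0.
apply: s_le => K [orb [h1 h2]]; exists orb; split.
  move=> j hj; have [a b] := h1 j hj; split => // i hi; apply: le_trans (b i hi) _; exact: hde.
move=> j j' hj hj' hjj; have [a b] := h2 j j' hj hj' hjj; split => //.
exact: le_trans hR b.
Qed.

Lemma G_ge0 Rs delta : (0 <= delta)%R -> 0 <= growth d f Rs delta x0.
Proof.
move=> de0; rewrite /growth /limn_esup; apply: limf_esup_ge0.
  by move=> [N _ /(_ N (leqnn N))].
move=> n /=; apply: mule_ge0; first by rewrite lee_fin invr_ge0.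
by rewrite lne_ge0; exact: s_ge1.
Qed.

Definition Ad delta := ereal_inf (range (fun Rs => growth d f Rs delta x0)).

Lemma Ad_le Rs delta : Ad delta <= growth d f Rs delta x0.
Proof. by apply: ereal_inf_lbound; exists Rs. Qed.

Lemma Ad_mono : {homo Ad : a b / (a <= b)%R >-> a <= b}.
Proof.
move=> a b ab; apply: le_ereal_inf_tmp => _ [Rs _ <-].
apply: le_trans (Ad_le Rs a) _; exact: G_mono.
Qed.

Lemma Ad_ge0 delta : (0 <= delta)%R -> 0 <= Ad delta.
Proof. by move=> de0; apply: le_ereal_inf_tmp => _ [Rs _ <-]; exact: G_ge0. Qed.

Lemma CE_eq : coarse_entropy d f x0 = ereal_sup (range Ad).
Proof.
rewrite /coarse_entropy.
have -> : (fun delta : R => lim ((fun Rsep : R => growth d f Rsep delta x0) @ +oo%R)) = Ad.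
  apply: funext => delta; apply: cvg_lim => //.
  apply: nonincreasing_cvge => a b ab; exact: G_mono.
apply: cvg_lim => //; apply: nondecreasing_cvge; exact: Ad_mono.
Qed.

Lemma CE_ge : 0 <= coarse_entropy d f x0.
Proof.
rewrite CE_eq; apply: le_ereal_sup_tmp; exists (Ad 0%R); first by exists 0%R.
exact: Ad_ge0.
Qed.

End Growth.

End P4.
Import P4.

Module P5.
Set Implicit Arguments. Unset Strict Implicit. Unset Printing Implicit Defensive.
Local Open Scope classical_set_scope.
Local Open Scope ring_scope.

Section Key.
Variables (R : realType) (X : Type) (d : X -> X -> R).
Hypothesis hd : is_metric d.
Variable x0 : X.

Lemma coef_ineq (k m : nat) : (0 < k)%N -> (k <= m)%N ->
  (k%:R / 2 * m%:R^-1 <= ((m %/ k).+1)%:R^-1 :> R)%R.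
Proof.
move=> k0 km.
have H : (k * (m %/ k).+1 <= 2 * m)%N.
  have := leq_divM m k; rewrite mulnS; lia.
have Hr : (k%:R * ((m %/ k).+1)%:R <= 2 * m%:R :> R)%R.
  by rewrite -natrM -(natrM _ 2) ler_nat.
set n := (m %/ k).+1 in Hr *.
have m0 : (0 < m%:R :> R)%R by rewrite ltr0n; lia.
have n0 : (0 < n%:R :> R)%R by rewrite ltr0n.
have hm : (m%:R * m%:R^-1 = 1 :> R)%R by rewrite mulfV // gt_eqF.
have hn : (n%:R * n%:R^-1 = 1 :> R)%R by rewrite mulfV // gt_eqF.
have mi0 : (0 < m%:R^-1 :> R)%R by rewrite invr_gt0.
have ni0 : (0 < n%:R^-1 :> R)%R by rewrite invr_gt0.
have := ler_wpM2r (ltW (mulr_gt0 mi0 ni0)) Hr.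
set mi := m%:R^-1; set ni := n%:R^-1.
move=> H2.
have e1 : (k%:R * n%:R * (mi * ni) = k%:R * mi * (n%:R * ni) :> R)%R by ring.
have e2 : (2 * m%:R * (mi * ni) = 2 * ni * (m%:R * mi) :> R)%R by ring.
rewrite e1 e2 hm hn !mulr1 in H2.
lra.
Qed.

Local Open Scope ereal_scope.

Lemma s_le2 (f g : X -> X) (n n' : nat) Rs Rs' delta delta' :
  (forall K, has_separated_set d f n Rs delta x0 K -> has_separated_set d g n' Rs' delta' x0 K) ->
  s_sep d f n Rs delta x0 <= s_sep d g n' Rs' delta' x0.
Proof.
move=> H; apply: ereal_sup_le => _ [K hK <-]; exists K => //; exact: H.
Qed.

Lemma key_id (k : nat) (delta Rs : R) : (0 < k)%N -> (0 <= delta)%R -> (0 < Rs)%R ->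
  (k%:R / 2)%:E * growth d id (Rs + 2 * k%:R * delta) delta x0
    <= growth d id Rs (k%:R * delta) x0.
Proof.
move=> k0 de0 Rs0; rewrite /growth.
apply: (@LS_scaled R _ _ (k%:R / 2) (fun m => (m %/ k).+1)).
  by rewrite divr_gt0 // ltr0n.
move=> N; exists (k * N + k)%N => m hm; split.
  have : (N <= m %/ k)%N by rewrite leq_divRL //; lia.
  lia.
rewrite muleA -EFinM.
apply: (@le_trans _ _ (((m %/ k).+1%:R^-1)%:E *
   lne (s_sep d id m (Rs + 2 * k%:R * delta) delta x0))).
  apply: lee_wpmul2r; first by rewrite lne_ge0; apply: (s_ge1 hd).
  rewrite lee_fin; apply: coef_ineq => //; lia.
apply: lee_wpmul2l; first by rewrite lee_fin invr_ge0.
apply: lne_mono; first exact: s_ge0.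
apply: s_le => K; exact: (sep_compress hd).
Qed.

Lemma key_pull (f : X -> X) (delta Rs : R) : isometric_embedding d f ->
  (d x0 (f x0) <= delta)%R -> (0 < Rs)%R ->
  (2^-1)%:E * growth d f Rs delta x0 <= growth d id Rs delta x0.
Proof.
move=> hf hc Rs0; rewrite /growth.
apply: (@LS_scaled R _ _ (2^-1) (fun m => (m + m)%N)) => // N.
exists N => m hm; split; first lia.
rewrite muleA -EFinM.
have -> : (2^-1 * m%:R^-1 = (m + m)%:R^-1 :> R)%R.
  have e : ((m + m)%:R = 2 * m%:R :> R)%R by rewrite natrD; ring.
  by rewrite e invfM.
apply: lee_wpmul2l; first by rewrite lee_fin invr_ge0.
apply: lne_mono; first exact: s_ge0.
apply: s_le2 => K; exact: (sep_pull hd hf).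
Qed.

Lemma key_lift (f : X -> X) (delta Rs : R) : isometric_embedding d f ->
  growth d id Rs delta x0 <= growth d f Rs delta x0.
Proof.
move=> hf; rewrite -[growth d id _ _ _]mul1e /growth.
apply: (@LS_scaled R _ _ 1 id) => // N; exists N => m hm; split => //.
rewrite mul1e; apply: lee_wpmul2l; first by rewrite lee_fin invr_ge0.
apply: lne_mono; first exact: s_ge0.
apply: s_le2 => K; exact: (sep_lift hd hf).
Qed.
End Key.

End P5.
Import P5.

Module P6.
Set Implicit Arguments. Unset Strict Implicit. Unset Printing Implicit Defensive.
Local Open Scope classical_set_scope.
Local Open Scope ring_scope.
Local Open Scope ereal_scope.

Section Final.
Variables (R : realType) (X : Type) (d : X -> X -> R).
Hypothesis hd : is_metric d.
Variable x0 : X.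

Lemma Ad_scale (k : nat) (delta : R) : (0 < k)%N -> (0 <= delta)%R ->
  (k%:R / 2)%:E * Ad d id x0 delta <= Ad d id x0 (k%:R * delta).
Proof.
move=> k0 de0; apply: le_ereal_inf_tmp => _ [Rs _ <-].
have h1 : (Rs <= Num.max Rs 1)%R by rewrite le_max lexx.
have h2 : (0 < Num.max Rs 1)%R by rewrite lt_max ltr01 orbT.
apply: le_trans (G_mono d id x0 h1 (lexx _)).
apply: le_trans (key_id hd x0 k0 de0 h2).
apply: lee_wpmul2l; first by rewrite lee_fin divr_ge0.
exact: Ad_le.
Qed.

Lemma dich : coarse_entropy d id x0 = 0 \/ coarse_entropy d id x0 = +oo.
Proof.
have h0 := CE_ge hd id x0.
have [hle|hlt] := leP (coarse_entropy d id x0) 0.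
  by left; apply/eqP; rewrite eq_le hle h0.
right; move: hlt; rewrite CE_eq => hlt.
have [_ [delta _ <-] hA] := ereal_sup_gt hlt.
set de := Num.max delta 0%R.
have hde : (0 <= de)%R by rewrite le_max lexx orbT.
have hA' : 0 < Ad d id x0 de.
  by apply: lt_le_trans hA (Ad_mono _ _ _ _); rewrite le_max lexx.
have hk : forall k, (0 < k)%N -> (k%:R / 2)%:E * Ad d id x0 de <= ereal_sup (range (Ad d id x0)).
  move=> k k0; apply: le_trans (Ad_scale k0 hde) _.
  by apply: ereal_sup_ubound; exists (k%:R * de)%R.
move: hA' hk; set a := Ad d id x0 de; set h := ereal_sup _.
case: a => [r||] ha hk; last by rewrite ltNge leNye in ha.
- have r0 : (0 < r)%R by rewrite -lte_fin.
  move: (hk 1%N isT); move: hk.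
  case: h => [t|//|] hk hk1; last by move: hk1; rewrite leeNy_eq.
  exfalso.
  set k := (Num.truncn (2 * t / r)).+1.
  have hkr : (2 * t / r < k%:R)%R by exact: truncnS_gt.
  have := hk k isT; rewrite -EFinM lee_fin => hk2.
  rewrite ltr_pdivrMr // in hkr.
  move: hk2 hkr; clear; move=> hk2 hkr.
  lra.
- have := hk 1%N isT; rewrite mulry gtr0_sg ?mul1e ?leye_eq => [/eqP//|].
  by rewrite divr_gt0.
Qed.


Lemma iso_part (f : X -> X) : isometric_embedding d f ->
  coarse_entropy d f x0 = 0 \/ coarse_entropy d f x0 = +oo.
Proof.
move=> hf.
have hlow : coarse_entropy d id x0 <= coarse_entropy d f x0.
  rewrite !CE_eq; apply: ge_ereal_sup => _ [de _ <-].
  apply: le_ereal_sup_tmp; exists (Ad d f x0 de); first by exists de.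
  apply: le_ereal_inf_tmp => _ [Rs _ <-].
  exact: le_trans (Ad_le _ _ _ Rs de) (key_lift hd x0 de Rs hf).
have hup : (2^-1)%:E * coarse_entropy d f x0 <= coarse_entropy d id x0.
  rewrite !CE_eq -ereal_sup_pZl ?invr_gt0 //.
  apply: ge_ereal_sup => _ [_ [de _ <-] <-].
  set de2 := Num.max de (d x0 (f x0)).
  have hc : (d x0 (f x0) <= de2)%R by rewrite le_max lexx orbT.
  apply: (@le_trans _ _ ((2^-1)%:E * Ad d f x0 de2)).
    apply: lee_wpmul2l; first by rewrite lee_fin invr_ge0.
    by apply: Ad_mono; rewrite le_max lexx.
  apply: (@le_trans _ _ (Ad d id x0 de2)); last by apply: ereal_sup_ubound; exists de2.
  apply: le_ereal_inf_tmp => _ [Rs _ <-].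
  have h1 : (Rs <= Num.max Rs 1)%R by rewrite le_max lexx.
  have h2 : (0 < Num.max Rs 1)%R by rewrite lt_max ltr01 orbT.
  apply: le_trans (G_mono d id x0 h1 (lexx _)).
  apply: le_trans (key_pull hd hf hc h2).
  apply: lee_wpmul2l; first by rewrite lee_fin invr_ge0.
  exact: Ad_le.
have h0 := CE_ge hd f x0.
case: dich => [e|e].
  left; apply/eqP; rewrite eq_le h0 andbT.
  rewrite e in hup; rewrite leNgt; apply/negP => hpos.
  have : 0 < (2^-1)%:E * coarse_entropy d f x0.
    by apply: mule_gt0 => //; rewrite lte_fin invr_gt0.
  by rewrite ltNge hup.
by right; apply/eqP; rewrite -leye_eq -e.
Qed.

End Final.

End P6.
Import P6.

Local Open Scope ereal_scope.

Theorem mainTheorem5 (R : realType) (X : Type) (d : X -> X -> R) :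
  is_metric d ->
  (forall x0 : X,
     coarse_entropy_space d x0 = 0 \/ coarse_entropy_space d x0 = +oo) /\
  (forall (f : X -> X) (x0 : X), isometric_embedding d f ->
     coarse_entropy d f x0 = 0 \/ coarse_entropy d f x0 = +oo).
Proof.
move=> hd; split.
  by move=> x0; exact: (dich hd x0).
by move=> f x0 hf; exact: (iso_part hd x0 hf).
Qed.
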